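(* Let $\mathcal{M}$ be an $\epsilon$-differentially private mechanism on datasets with $n$ rows. Let $T = T_{A_k}\circ\cdots\circ T_{A_1}$ be a sequence of imputation transformations, one for each attribute $A_1,\ldots,A_k$, where each $T_{A_j}$ replaces all missing entries of attribute $A_j$ by a value computed from its input dataset and leaves all other entries unchanged. Then the composite mechanism $\mathcal{M}\circ T$ is $n\epsilon$-differentially private on incomplete datasets with $n$ rows.
   Context: A randomized mechanism $\mathcal{M}$ is $(\epsilon,\delta)$-DP if for all neighbouring datasets $D,D'$ (same number of rows, differing in exactly one row) and all measurable output sets $Z$, $\Pr[\mathcal{M}(D)\in Z]\le e^{\epsilon}\Pr[\mathcal{M}(D')\in Z]+\delta$; $\epsilon$-DP means $(\epsilon,0)$-DP. Datasets may contain missing cells. *)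

(* Defs.v *)
From HB Require Import structures.
From mathcomp Require Import all_boot all_order all_algebra.
From mathcomp Require Import all_classical all_reals all_analysis.
Set Implicit Arguments. Unset Strict Implicit. Unset Printing Implicit Defensive.
Import Order.TTheory GRing.Theory Num.Theory.
Local Open Scope ring_scope.

(* A dataset with n rows and k attributes (columns); each cell holds an
   optional value of type V, [None] meaning a missing cell. *)
Definition dataset (V : Type) (n k : nat) := 'I_n -> 'I_k -> option V.

Definition neighbours (V : Type) (n k : nat) (D D' : dataset V n k) : Prop :=
  exists i : 'I_n, D i <> D' i /\ forall j : 'I_n, j <> i -> D j = D' j.

Definition DP (V : Type) (n k : nat) (R : realType) (d : measure_display)
  (T : measurableType d) (M : dataset V n k -> probability T R) (eps delta : R)
  : Prop :=
  forall D D' : dataset V n k, neighbours D D' ->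
  forall Z : set T, measurable Z ->
    (M D Z <= (expR eps)%:E * M D' Z + delta%:E)%E.

Definition pureDP (V : Type) (n k : nat) (R : realType) (d : measure_display)
  (T : measurableType d) (M : dataset V n k -> probability T R) (eps : R) : Prop :=
  DP M eps 0.

Definition impute (V : Type) (n k : nat) (a : 'I_k) (f : dataset V n k -> V)
  (D : dataset V n k) : dataset V n k :=
  fun r c => if c == a then
               match D r c with None => Some (f D) | Some v => Some v end
             else D r c.

(* T = T_{A_k} o ... o T_{A_1}: impute attribute 0 first, then 1, ..., k-1,
   where f a is the imputation rule of attribute a. *)
Definition impute_all (V : Type) (n k : nat) (f : 'I_k -> dataset V n k -> V)
  (D : dataset V n k) : dataset V n k :=
  foldl (fun D' a => impute a (f a) D') D (enum 'I_k).

(* Main.v *)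
Require Import Defs.
From HB Require Import structures.
From mathcomp Require Import all_boot all_order all_algebra.
From mathcomp Require Import all_classical all_reals all_analysis.
Import Order.TTheory GRing.Theory Num.Theory.
Local Open Scope ring_scope.

Definition hyb {V : Type} {n k : nat} (E E' : dataset V n k) (m : nat)
  : dataset V n k := fun r => if (r < m)%N then E' r else E r.

Lemma hyb_step (V : Type) (n k : nat) (E E' : dataset V n k) (m : nat) :
  hyb E E' m = hyb E E' m.+1 \/ neighbours (hyb E E' m) (hyb E E' m.+1).
Proof.
have key : forall j : 'I_n, hyb E E' m j <> hyb E E' m.+1 j -> val j = m.
  move=> j; rewrite /hyb ltnS.
  case: (ltngtP j m) => [jm|jm|//].
  - by [].
  - by [].
case: (pselect (hyb E E' m = hyb E E' m.+1)) => h; [by left|right].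
have [i hi] : exists i, hyb E E' m i <> hyb E E' m.+1 i.
  apply: contra_notP h => hn; apply: funext => i.
  by apply: contra_notP hn => hi; exists i.
exists i; split => // j ji; apply: contra_notP ji => hj.
by apply: val_inj; rewrite (key _ hj) (key _ hi).
Qed.

Theorem theorem2 (V : Type) (n k : nat) (R : realType) (d : measure_display)
  (T : measurableType d) (M : dataset V n k -> probability T R) (eps : R)
  (f : 'I_k -> dataset V n k -> V) :
  pureDP M eps ->
  pureDP (fun D => M (impute_all f D)) (n%:R * eps).
Proof.
move=> H D D' hn Z mZ.
have e0 : 0 <= eps.
  rewrite leNgt; apply/negP => en.
  have := H D D' hn setT measurableT.
  rewrite !probability_setT adde0 mule1 lee_fin.
  by rewrite leNgt expR_lt1 en.
rewrite adde0.
set E := impute_all f D; set E' := impute_all f D'.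
have step : forall m, (M E Z <= (expR (m%:R * eps))%:E * M (hyb E E' m) Z)%E.
  elim => [|m IH].
    rewrite mul0r expR0 mul1e; suff -> : hyb E E' 0 = E by [].
    by apply: funext => r; rewrite /hyb ltn0.
  apply: (le_trans IH).
  have h1 : (M (hyb E E' m) Z <= (expR eps)%:E * M (hyb E E' m.+1) Z)%E.
    case: (@hyb_step _ _ _ E E' m) => [<-|hh].
      rewrite -{1}(mul1e (M (hyb E E' m) Z)).
      apply: lee_wpmul2r => //.
      by rewrite lee_fin leNgt expR_lt1 -leNgt.
    by have := H _ _ hh Z mZ; rewrite adde0.
  have h2 : ((expR (m%:R * eps))%:E * M (hyb E E' m) Z <=
     (expR (m%:R * eps))%:E * ((expR eps)%:E * M (hyb E E' m.+1) Z))%E.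
    by apply: lee_wpmul2l; [rewrite lee_fin expR_ge0 | exact: h1].
  apply: (le_trans h2).
  rewrite muleA -EFinM -expRD -natr1 mulrDl mul1r.
  exact: lexx.
have := step n; suff -> : hyb E E' n = E' by [].
by apply: funext => r; rewrite /hyb ltn_ord.
Qed.
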